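(* Let $f:\mathbb{Z}\to\mathbb{R}$ be a function of bounded variation, i.e. $\mathrm{Var}(f)=\sum_{n\in\mathbb{Z}}|f(n+1)-f(n)|<\infty$. Then $$\mathrm{Var}(\widetilde{M}f)\le \mathrm{Var}(f),$$ and the constant $1$ is best possible: there is no constant $C<1$ such that $\mathrm{Var}(\widetilde{M}f)\le C\,\mathrm{Var}(f)$ holds for all functions $f:\mathbb{Z}\to\mathbb{R}$ of bounded variation.
   Context: Let $\mathbb{Z}^+=\{0,1,2,\dots\}$. For $f:\mathbb{Z}\to\mathbb{R}$, the discrete non-centered Hardy–Littlewood maximal operator is $$\widetilde{M}f(n)=\sup_{r,s\in\mathbb{Z}^+}\frac{1}{r+s+1}\sum_{k=-r}^{s}|f(n+k)|,\qquad n\in\mathbb{Z}.$$ The total variation of $g:\mathbb{Z}\to\mathbb{R}$ is $\mathrm{Var}(g)=\sum_{n=-\infty}^{\infty}|g(n+1)-g(n)|$. *)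

(* Defs.v *)
From HB Require Import structures.
From mathcomp Require Import all_boot all_order all_algebra.
From mathcomp Require Import all_classical all_reals all_analysis.
Set Implicit Arguments. Unset Strict Implicit. Unset Printing Implicit Defensive.
Import Order.TTheory GRing.Theory Num.Theory.
Local Open Scope classical_set_scope.
Local Open Scope ring_scope.

Definition window_avg (R : realType) (f : int -> R) (n : int) (r s : nat) : R :=
  (\sum_(k < r + s + 1) `|f (n - r%:Z + k%:Z)|) / (r + s + 1)%:R.

(* Discrete non-centered Hardy-Littlewood maximal operator:
   sup over r, s in Z^+ of the window averages (real supremum `sup`;
   the set is bounded whenever f is bounded, e.g. of bounded variation). *)
Definition maxop (R : realType) (f : int -> R) (n : int) : R :=
  sup [set window_avg f n r s | r in [set: nat] & s in [set: nat]].

Definition Var (R : realType) (g : int -> R) : \bar R :=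
  \esum_(n in [set: int]) (`|g (n + 1) - g n|)%:E.

(* Main.v *)
Require Import Defs.
From HB Require Import structures.
From mathcomp Require Import all_boot all_order all_algebra.
From mathcomp Require Import all_classical all_reals all_analysis.
From mathcomp Require Import finmap.
From mathcomp Require Import zify ring lra.
Import Order.TTheory GRing.Theory Num.Theory.
Set Implicit Arguments. Unset Strict Implicit. Unset Printing Implicit Defensive.
Local Open Scope classical_set_scope.
Local Open Scope ring_scope.

Section S.
Variable R : realType.

Definition Vn (f : int -> R) (a : int) (k : nat) : R :=
  \sum_(i < k) `|f (a + i%:Z + 1) - f (a + i%:Z)|.

Lemma Vn_ge0 f a k : 0 <= Vn f a k.
Proof. by apply: sumr_ge0 => i _. Qed.

Lemma VnS f a k : Vn f a k.+1 = Vn f a k + `|f (a + k%:Z + 1) - f (a + k%:Z)|.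
Proof. by rewrite /Vn big_ord_recr. Qed.

Lemma VnD f a k l : Vn f a (k + l) = Vn f a k + Vn f (a + k%:Z) l.
Proof.
rewrite /Vn big_split_ord /=; congr (_ + _); apply: eq_bigr => i _.
by rewrite PoszD !addrA.
Qed.

Lemma Vn_diff f a k : `|f (a + k%:Z) - f a| <= Vn f a k.
Proof.
elim: k => [|k IH]; first by rewrite addr0 subrr normr0 /Vn big_ord0.
rewrite VnS.
have -> : a + k.+1%:Z = a + k%:Z + 1 by rewrite -addrA -PoszD addn1.
have := ler_normD (f (a + k%:Z + 1) - f (a + k%:Z)) (f (a + k%:Z) - f a).
rewrite addrA subrK; lra.
Qed.

End S.

Section S2.
Variable R : realType.
Local Open Scope ereal_scope.

Definition Iset (a:int) (k:nat) : set int := [set (a + i%:Z)%R | i in `I_k].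

Lemma sum_Iset (f : int -> R) a k :
  \sum_(n \in Iset a k) (`|f (n+1) - f n|%R)%:E = (Vn f a k)%:E.
Proof.
rewrite /Iset fsbig_image; last by move=> i j _ _ /addrI [].
by rewrite -fsbig_ord sumEFin.
Qed.

Lemma Vn_le_Var (f : int -> R) a k : (Vn f a k)%:E <= Var f.
Proof.
rewrite -sum_Iset; apply: esum_ge; exists (Iset a k) => //; split => //.
exact: finite_image (finite_II k).
Qed.

Lemma Var_le_of (g : int -> R) (V : \bar R) :
  (forall a k, (Vn g a k)%:E <= V) -> Var g <= V.
Proof.
move=> H; apply: ge_ereal_sup => _ [X [finX _] <-].
set s := fset_set X.
pose M := (\sum_(x <- finmap.enum_fset s) `|x|)%N.
have HX : forall x, X x -> (`|x| <= M)%N.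
  move=> x Xx; have xs : x \in s by rewrite in_fset_set //; apply/mem_set.
  by rewrite /M (bigD1_seq x) //= ?fset_uniq // leq_addr.
have sub : X `<=` Iset (- M%:Z)%R (M + M).+1.
  move=> x Xx; have := HX x Xx => hx.
  exists `|(x + M%:Z)%R|%N; rewrite /=; first lia.
  lia.
apply: le_trans (H (- M%:Z)%R (M+M).+1); rewrite -sum_Iset.
apply: lee_fsum_nneg_subset => //; first exact: finite_image (finite_II _).
exact/subsetP.
Qed.

End S2.

Definition Inv (R : realType) (g h : int -> R) (W : int -> int -> R) (A : int) (eps : R) (k : nat) :=
  let n := (A + k%:Z)%R in let v := Vn g A k in let e := (eps * (2 * k)%:R)%R in
  [\/ exists c, v <= c - g n + e /\ forall z, n <= z -> exists a, a <= z /\ c - h z <= W a z,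
      exists m c, [/\ m <= n, g m < g n, v <= c + g n + e & forall z, m < z -> exists a, a <= z /\ c + h z <= W a z]
    | v <= g n - g A + e]%R.

Section Comb.
Local Open Scope ring_scope.

Lemma Inv_step (R : realType) (g h : int -> R) (W : int -> int -> R)
 (Hhg : forall n, h n <= g n)
 (Hw : forall x eta, 0 < eta -> exists y, g x - eta < h y /\
        forall p, g p <= g x - eta -> (p <= x -> p < y) /\ (x <= p -> y < p))
 (WD : forall a b c, a <= b -> b <= c -> W a c = W a b + W b c)
 (Wh : forall a b, a <= b -> `|h b - h a| <= W a b)
 (A : int) (eps : R) (he : 0 < eps) (k : nat) :
 Inv g h W A eps k -> Inv g h W A eps k.+1.
Proof.
rewrite /Inv VnS; cbv zeta.
have -> : A + k.+1%:Z = A + k%:Z + 1 by rewrite -addn1 PoszD addrA.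
have -> : eps * (2 * k.+1)%:R = eps * (2 * k)%:R + 2 * eps.
  by rewrite mulnS natrD mulrDr addrC [eps * 2%:R]mulrC.
set n := A + k%:Z; set v := Vn g A k; set e := eps * (2 * k)%:R.
have e0 : 0 <= e by rewrite /e mulr_ge0 // ltW.
have hWh1 : forall a b, a <= b -> h b - h a <= W a b.
  by move=> a b ab; apply: le_trans (Wh a b ab); apply: ler_norm.
have hWh2 : forall a b, a <= b -> h a - h b <= W a b.
  by move=> a b ab; apply: le_trans (Wh a b ab); rewrite distrC; apply: ler_norm.
case=> [[c [Hv Hc]]|[m [c [hm hgm Hv Hc]]]|Hv].
- have [le|lt] := leP (g (n+1)) (g n).
  + apply: Or31; exists c; split.
      rewrite distrC ger0_norm ?subr_ge0 //; lra.
    by move=> z hz; apply: Hc; lia.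
  + apply: Or32; exists n, (c - 2 * h n); split => //.
    * lia.
    * rewrite ger0_norm ?subr_ge0 ?ltW //; have := Hhg n; lra.
    * move=> z hz; have [a [ha Ha]] := Hc n (lexx _); exists a; split; first lia.
      rewrite (WD a n z) //; last lia.
      have := hWh1 n z ltac:(lia); lra.
- have [le|lt] := leP (g n) (g (n+1)).
  + apply: Or32; exists m, c; split => //.
    * lia.
    * exact: lt_le_trans le.
    * rewrite ger0_norm ?subr_ge0 //; lra.
  + pose eta := Num.min eps (Num.min (g n - g m) (g n - g (n+1))).
    have eta0 : 0 < eta by rewrite /eta !lt_min he !subr_gt0 hgm lt.
    have etae : eta <= eps by rewrite /eta ge_min lexx.
    have etam : eta <= g n - g m by rewrite /eta !ge_min lexx orbT.
    have etan : eta <= g n - g (n+1) by rewrite /eta !ge_min lexx !orbT.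
    have [y [hy Hy]] := Hw n eta eta0.
    have my : m < y by apply: (Hy m _).1 => //; lra.
    have yn : y < n + 1 by apply: (Hy (n+1) _).2; [lra | lia].
    apply: Or31; exists (c + 2 * h y); split.
      rewrite distrC ger0_norm ?subr_ge0 ?ltW //; lra.
    move=> z hz; have yz : y <= z := ltW (lt_le_trans yn hz).
    have [a [ha Ha]] := Hc y my; exists a; split; first exact: le_trans ha yz.
    rewrite (WD a y z ha yz).
    have := hWh2 y z yz; lra.
- have [le|lt] := leP (g n) (g (n+1)).
  + apply: Or33; rewrite ger0_norm ?subr_ge0 //; lra.
  + pose eta := Num.min eps (g n - g (n+1)).
    have eta0 : 0 < eta by rewrite /eta !lt_min he !subr_gt0 lt.
    have etae : eta <= eps by rewrite /eta ge_min lexx.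
    have etan : eta <= g n - g (n+1) by rewrite /eta !ge_min lexx !orbT.
    have [y [hy Hy]] := Hw n eta eta0.
    have yn : y < n + 1 by apply: (Hy (n+1) _).2; [lra | lia].
    have [gA|gA] := leP (g A) (g n - eta).
    * have Ay : A < y by apply: (Hy A gA).1; rewrite /n; lia.
      apply: Or31; exists (2 * h y - h A); split.
        rewrite distrC ger0_norm ?subr_ge0 ?ltW //; have := Hhg A; lra.
      move=> z hz; exists A; split; first lia.
      rewrite (WD A y z); [|lia|lia].
      have := hWh1 A y ltac:(lia); have := hWh2 y z ltac:(lia); lra.
    * apply: Or31; exists (h y); split.
        rewrite distrC ger0_norm ?subr_ge0 ?ltW //; lra.
      move=> z hz; exists y; split; first lia.
      have := hWh2 y z ltac:(lia); lra.
Qed.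

End Comb.

Lemma comb (R : realType) (g h : int -> R) (W : int -> int -> R)
 (Hhg : forall n, h n <= g n)
 (Hw : forall x eta, 0 < eta -> exists y, g x - eta < h y /\
        forall p, g p <= g x - eta -> (p <= x -> p < y) /\ (x <= p -> y < p))
 (WD : forall a b c, a <= b -> b <= c -> W a c = W a b + W b c)
 (Wh : forall a b, a <= b -> `|h b - h a| <= W a b)
 (A : int) (eps : R) (he : 0 < eps) (k : nat) :
 exists a b, a <= b /\ Vn g A k <= W a b + eps * (2 * k)%:R + eps.
Proof.
have I : Inv g h W A eps k.
  elim: k => [|k IH]; last exact: Inv_step.
  by apply: Or33; rewrite /Vn big_ord0 addr0 subrr mulr0 addr0.
move: I; rewrite /Inv; cbv zeta.
set n := A + k%:Z; set v := Vn g A k; set e := eps * (2 * k)%:R.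
have hWh1 : forall a b, a <= b -> h b - h a <= W a b.
  by move=> a b ab; apply: le_trans (Wh a b ab); apply: ler_norm.
case=> [[c [Hv Hc]]|[m [c [hm hgm Hv Hc]]]|Hv].
- have [a [ha Ha]] := Hc n (lexx _); exists a, n; split => //.
  have := Hhg n; lra.
- pose eta := Num.min eps (g n - g m).
  have eta0 : 0 < eta by rewrite /eta !lt_min he !subr_gt0 hgm.
  have etae : eta <= eps by rewrite /eta ge_min lexx.
  have etam : eta <= g n - g m by rewrite /eta !ge_min lexx orbT.
  have [y [hy Hy]] := Hw n eta eta0.
  have my : m < y by apply: (Hy m _).1 => //; lra.
  have [a [ha Ha]] := Hc y my; exists a, y; split => //; lra.
- have [y [hy Hy]] := Hw n eps he.
  have [gA|gA] := leP (g A) (g n - eps).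
  + have Ay : A < y by apply: (Hy A gA).1; rewrite /n; lia.
    exists A, y; split; first lia.
    have := hWh1 A y ltac:(lia); have := Hhg A; lra.
  + exists n, n; split => //.
    have := Wh n n (lexx _); rewrite subrr normr0 => W0.
    have : 0 <= e by rewrite /e mulr_ge0 // ltW.
    lra.
Qed.

Section Max.
Local Open Scope ring_scope.

Lemma wavg_le (R : realType) (f : int -> R) (K : R) n r s :
  (forall k : 'I_(r + s + 1), `|f (n - r%:Z + k%:Z)| <= K) -> window_avg f n r s <= K.
Proof.
move=> H; rewrite /window_avg ler_pdivrMr; last by rewrite ltr0n addn1.
apply: le_trans (ler_sum _ (fun i _ => H i)) _.
by rewrite sumr_const card_ord mulr_natr.
Qed.

Lemma wavg_exists (R : realType) (f : int -> R) n r s t :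
  t < window_avg f n r s -> exists k, (k <= r + s)%N /\ t < `|f (n - r%:Z + k%:Z)|.
Proof.
move=> Ht; case: (pselect (exists k, (k <= r + s)%N /\ t < `|f (n - r%:Z + k%:Z)|)) => // H.
exfalso; suff : window_avg f n r s <= t by rewrite leNgt Ht.
apply: wavg_le => k; rewrite leNgt; apply/negP => Hk; apply: H.
by exists k; split => //; have := ltn_ord k; lia.
Qed.

Lemma wavg_shift (R : realType) (f : int -> R) n r s k : (k <= r + s)%N ->
  window_avg f (n - r%:Z + k%:Z) k (r + s - k) = window_avg f n r s.
Proof.
move=> hk; rewrite /window_avg.
have -> : (k + (r + s - k))%N = (r + s)%N by lia.
congr (_ / _); apply: eq_bigr => i _; by rewrite addrK.
Qed.

Lemma maxop_ge (R : realType) (f : int -> R) (K : R) n r s : (forall j, `|f j| <= K) ->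
  window_avg f n r s <= maxop f n.
Proof.
move=> HK; rewrite /maxop; apply: ub_le_sup; last by exists r => //; exists s.
by exists K => _ [r' _ [s' _ <-]]; apply: wavg_le.
Qed.

Lemma maxop_approx (R : realType) (f : int -> R) (K : R) n eta : (forall j, `|f j| <= K) ->
  0 < eta -> exists r s, maxop f n - eta < window_avg f n r s.
Proof.
move=> HK eta0; rewrite /maxop.
have hs : has_sup [set window_avg f n r s | r in [set: nat] & s in [set: nat]].
  split; first by exists (window_avg f n 0 0); exists 0%N => //; exists 0%N.
  by exists K => _ [r' _ [s' _ <-]]; apply: wavg_le.
by have [_ [r _ [s _ <-]] H] := sup_adherent eta0 hs; exists r, s.
Qed.

Lemma maxop_le (R : realType) (f : int -> R) n t :
  (forall r s, window_avg f n r s <= t) -> maxop f n <= t.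
Proof.
move=> H; rewrite /maxop; apply: ge_sup; first by exists (window_avg f n 0 0); exists 0%N => //; exists 0%N.
by move=> _ [r' _ [s' _ <-]].
Qed.

Lemma h_le_g (R : realType) (f : int -> R) (K : R) n : (forall j, `|f j| <= K) ->
  `|f n| <= maxop f n.
Proof.
move=> HK; apply: le_trans (maxop_ge n 0 0 HK).
by rewrite /window_avg big_ord1 /= subr0 addr0 divr1.
Qed.

Lemma witness (R : realType) (f : int -> R) (K : R) x eta : (forall j, `|f j| <= K) ->
  0 < eta -> exists y, maxop f x - eta < `|f y| /\
   forall p, maxop f p <= maxop f x - eta -> (p <= x -> p < y) /\ (x <= p -> y < p).
Proof.
move=> HK eta0; have [r [s Hrs]] := maxop_approx x HK eta0.
have [k [hk Hk]] := wavg_exists Hrs.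
exists (x - r%:Z + k%:Z); split => // p hp.
have out : p < x - r%:Z \/ x + s%:Z < p.
  case: (boolP ((x - r%:Z <= p) && (p <= x + s%:Z))) => [/andP[h1 h2]|]; last first.
    by rewrite negb_and -!ltNge; case/orP; [left|right].
  exfalso; pose j := absz (p - (x - r%:Z))%R.
  have hj : (j <= r + s)%N by rewrite /j; lia.
  have pe : p = x - r%:Z + j%:Z by rewrite /j; lia.
  have := maxop_ge (x - r%:Z + j%:Z) j (r + s - j) HK.
  rewrite wavg_shift // -pe; lra.
by split => hx; lia.
Qed.

End Max.

Section Part1.
Local Open Scope ring_scope.

Definition W2 (R : realType) (f : int -> R) (a b : int) : R := Vn f a (absz (b - a)%R).

Lemma W2D (R : realType) (f : int -> R) a b c : a <= b -> b <= c ->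
  W2 f a c = W2 f a b + W2 f b c.
Proof.
move=> ab bc; rewrite /W2.
have -> : absz (c - a)%R = (absz (b - a)%R + absz (c - b)%R)%N by lia.
rewrite VnD; congr (_ + _); congr Vn; lia.
Qed.

Lemma W2h (R : realType) (f : int -> R) a b : a <= b ->
  `| `|f b| - `|f a| | <= W2 f a b.
Proof.
move=> ab; apply: le_trans (ler_dist_dist _ _) _.
have := Vn_diff f a (absz (b - a)%R).
have -> : a + (absz (b - a)%R)%:Z = b by lia.
by [].
Qed.

Lemma fin_Var (R : realType) (f : int -> R) : (Var f < +oo)%E ->
  Var f = (fine (Var f))%:E.
Proof.
move=> H; rewrite fineK // ge0_fin_numE //; apply: esum_ge0 => x _.
by rewrite lee_fin.
Qed.

Lemma Vn_le_fine (R : realType) (f : int -> R) a k : (Var f < +oo)%E ->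
  Vn f a k <= fine (Var f).
Proof. by move=> H; rewrite -lee_fin -fin_Var //; apply: Vn_le_Var. Qed.

Lemma bounded_of_Var (R : realType) (f : int -> R) : (Var f < +oo)%E ->
  forall j, `|f j| <= `|f 0| + fine (Var f).
Proof.
move=> H j; have [j0|j0] := leP 0 j.
- have := Vn_diff f 0 (absz j); have -> : 0 + (absz j)%:Z = j by lia.
  have := Vn_le_fine 0 (absz j) H; have := lerB_dist (f j) (f 0); lra.
- have := Vn_diff f j (absz j); have -> : j + (absz j)%:Z = 0 by lia.
  have := Vn_le_fine j (absz j) H; have := lerB_dist (f j) (f 0).
  rewrite distrC; lra.
Qed.

Lemma part1 (R : realType) (f : int -> R) : (Var f < +oo)%E -> (Var (maxop f) <= Var f)%E.
Proof.
move=> H; have HK := bounded_of_Var H.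
apply: Var_le_of => A k; rewrite (fin_Var H) lee_fin.
apply/ler_addgt0Pr => e e0.
pose eps := e / (2 * k + 1)%:R.
have hN : 0 < (2 * k + 1)%:R :> R by rewrite ltr0n addn1.
have eps0 : 0 < eps by rewrite /eps divr_gt0.
have epsE : eps * (2 * k)%:R + eps = e.
  have hM : (2 * k + 1)%:R = (2 * k)%:R + 1 :> R by rewrite natrD.
  rewrite /eps hM; field; by rewrite -natrM -hM gt_eqF.
have [a [b [ab Hab]]] := comb (g := maxop f) (h := fun n => `|f n|) (W := W2 f)
  (fun n => h_le_g n HK) (fun x eta e0 => witness x HK e0)
  (@W2D R f) (@W2h R f) A eps0 k.
have := Vn_le_fine a (absz (b - a)%R) H; rewrite -/(W2 f a b); lra.
Qed.

End Part1.

Section Part2.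
Local Open Scope ring_scope.

Definition f0 (R : realType) : int -> R := fun n => if n == 0 then 1 else 0.

Lemma f0_le1 (R : realType) j : `|f0 R j| <= 1.
Proof. by rewrite /f0; case: ifP => _; rewrite ?normr1 ?normr0. Qed.

Lemma sum_f0_le1 (R : realType) L b : \sum_(i < L) `|f0 R (b + i%:Z)| <= 1.
Proof.
elim: L b => [|L IH] b; first by rewrite big_ord0.
rewrite big_ord_recl /= addr0.
under eq_bigr => i _ do rewrite /bump /= add1n -addn1 PoszD addrA addrAC.
have [b0|b0] := eqVneq b 0.
- rewrite big1 ?addr0; first exact: f0_le1.
  move=> i _; rewrite /f0 b0 add0r.
  have -> : (1%Z + i%:Z == 0) = false by apply/eqP; lia.
  exact: normr0.
- have -> : `|f0 R b| = 0 by rewrite /f0 (negbTE b0) normr0.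
  by rewrite add0r; apply: IH.
Qed.

Lemma Vn_f0 (R : realType) a k : Vn (f0 R) a k <= 2.
Proof.
rewrite /Vn; apply: le_trans (ler_sum _ (fun i _ => ler_normB _ _)) _.
rewrite big_split /=.
have := sum_f0_le1 R k (a + 1); have := sum_f0_le1 R k a.
under eq_bigr => i _ do rewrite addrAC.
lra.
Qed.

Lemma wavg_f0 (R : realType) x r s N :
  ((N <= r + s)%N \/ (forall i, (i < r + s + 1)%N -> x - r%:Z + i%:Z != 0)) ->
  window_avg (f0 R) x r s <= (N.+1%:R)^-1.
Proof.
have hN : 0 < (N.+1%:R : R) by rewrite ltr0n.
rewrite /window_avg ler_pdivrMr; last by rewrite ltr0n addn1.
case=> [hle|hne].
- apply: le_trans (sum_f0_le1 R _ _) _.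
  have hL : (N.+1%:R : R) <= (r + s + 1)%:R by rewrite ler_nat; lia.
  apply: le_trans (ler_wpM2l _ hL); last by rewrite invr_ge0 ltW.
  by rewrite mulVf // gt_eqF.
- rewrite big1; first by rewrite mulr_ge0 // ?invr_ge0 ?ltW.
  by move=> i _; rewrite /f0 (negbTE (hne i (ltn_ord i))) normr0.
Qed.

Lemma arith (R : realType) (gz gp gm a b Cv I : R) : gz - gp <= b -> gz - gm <= a ->
  a + b <= Cv -> 1 <= gz -> gp <= I -> gm <= I -> I < (2 - Cv) / 2 -> False.
Proof. move=> *; lra. Qed.

Lemma part2 (R : realType) : ~ (exists C : R, (C < 1)%R /\
       forall f : int -> R, (Var f < +oo)%E -> (Var (maxop f) <= C%:E * Var f)%E).
Proof.
case=> C [C1 HC].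
have V2 : (Var (f0 R) <= 2%:E)%E by apply: Var_le_of => a k; rewrite lee_fin Vn_f0.
have Vfin : (Var (f0 R) < +oo)%E by apply: le_lt_trans V2 _; apply: ltry.
have := HC _ Vfin; rewrite (fin_Var Vfin) -EFinM.
set v := fine (Var (f0 R)) => HV.
have v0 : 0 <= v by rewrite /v fine_ge0 // esum_ge0 // => x _; rewrite lee_fin.
have v2 : v <= 2 by rewrite -lee_fin /v -fin_Var.
have Cv : C * v < 2.
  have [vl|vl] := ltP v 2.
  - have : C * v <= v.
      have : 0 <= (1 - C) * v by rewrite mulr_ge0 // subr_ge0 ltW.
      lra.
    lra.
  - have -> : v = 2 by lra.
    lra.
pose d := (2 - C * v) / 2.
have d0 : 0 < d by rewrite /d divr_gt0 // subr_gt0.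
have := truncnS_gt (d^-1); set N := Num.truncn _ => hN.
have hN0 : 0 < (N.+1%:R : R) by rewrite ltr0n.
have hd : (N.+1%:R)^-1 < d.
  rewrite -(invrK d) ltf_pV2 ?posrE ?invr_gt0 //.
have K1 : forall j, `|f0 R j| <= 1 by move=> j; apply: f0_le1.
have g0 : 1 <= maxop (f0 R) 0.
  by have := h_le_g 0 K1; rewrite /f0 eqxx normr1.
have gN : maxop (f0 R) N%:Z <= (N.+1%:R)^-1.
  apply: maxop_le => r s; apply: wavg_f0.
  have [Nr|Nr] := leqP N r; [left; clear -Nr; lia | right => i hi; clear -Nr hi; lia].
have gmN : maxop (f0 R) (- N%:Z) <= (N.+1%:R)^-1.
  apply: maxop_le => r s; apply: wavg_f0.
  have [Ns|Ns] := leqP N s; [left; clear -Ns; lia | right => i hi; clear -Ns hi; lia].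
have := Vn_le_Var (maxop (f0 R)) (- N%:Z) (N + N).
rewrite VnD.
have := Vn_diff (maxop (f0 R)) (- N%:Z) N.
have := Vn_diff (maxop (f0 R)) (- N%:Z + N%:Z) N.
have -> : - N%:Z + N%:Z = 0 by rewrite addNr.
rewrite add0r => h1 h2 h3.
have := le_trans h3 HV; rewrite lee_fin => h4.
rewrite distrC in h1.
have h1' := le_trans (ler_norm _) h1.
have h2' := le_trans (ler_norm _) h2.
exact: (arith h1' h2' h4 g0 gN gmN hd).
Qed.

End Part2.


Import Order.TTheory GRing.Theory Num.Theory.
Local Open Scope ring_scope.
Local Open Scope ereal_scope.

Theorem theorem1 (R : realType) :
  (forall f : int -> R, Var f < +oo -> Var (maxop f) <= Var f) /\
  ~ (exists C : R, (C < 1)%R /\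
       forall f : int -> R, Var f < +oo -> Var (maxop f) <= C%:E * Var f).
Proof. split; [exact: part1 | exact: part2]. Qed.
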